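(* Let $n,N\ge1$ and positive integers $r_1,\dots,r_N,r$ with $r_i\le r\le\lfloor(n-1)/2\rfloor$. Consider either (a) $d=n$, $p=r_i+1$, $q=n-r_i$ for some $i$, and $\mathcal{A}(y)=\mathcal{H}_{r_i+1}(y)$ for $y\in\mathbb{R}^n$; or (b) $d=Nn$, $p=r+1$, $q=N(n-r)$, and $\mathcal{A}(y)=[\mathcal{H}_{r+1}(y_1)\cdots\mathcal{H}_{r+1}(y_N)]$ for $y=(y_1^\top,\dots,y_N^\top)^\top\in\mathbb{R}^{Nn}$. Then for any $U\in\mathbb{R}^{1\times q}$ and any $R\in\mathbb{R}^{1\times p}\setminus\{0\}$, if $\mathcal{A}^*(R^\top U)=0$ then $U=0$.
   Context: For $x\in\mathbb{R}^n$ and $1\le l\le n$, $\mathcal{H}_l(x)\in\mathbb{R}^{l\times(n-l+1)}$ is the Hankel matrix with $(i,j)$ entry $x(i+j-1)$. $\mathcal{A}^*:\mathbb{R}^{p\times q}\to\mathbb{R}^d$ is the adjoint of the linear map $\mathcal{A}:\mathbb{R}^d\to\mathbb{R}^{p\times q}$ with respect to the standard (Frobenius) inner products. *)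

(* Defs.v *)
From HB Require Import structures.
From mathcomp Require Import all_boot all_order all_algebra.
From mathcomp Require Import reals.
Set Implicit Arguments. Unset Strict Implicit. Unset Printing Implicit Defensive.
Import Order.TTheory GRing.Theory Num.Theory.
Local Open Scope ring_scope.

(* Vectors of R^n are column vectors 'cV[R]_n; all indices are 0-based. *)

(* total accessor: k-th entry of x (0-based), 0 if out of range *)
Definition vget (R : realType) (n : nat) (x : 'cV[R]_n) (k : nat) : R :=
  if insub k is Some i then x i 0 else 0.

Definition mget (R : realType) (p q : nat) (M : 'M[R]_(p, q)) (i j : nat) : R :=
  match insub i, insub j with Some i', Some j' => M i' j' | _, _ => 0 end.

(* Hankel matrix H_l(x) in R^{l x (n-l+1)}, (i,j) entry x(i+j-1) in 1-based
   indexing, i.e. x(i+j) in 0-based indexing. *)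
Definition hankel (R : realType) (n l : nat) (x : 'cV[R]_n) : 'M[R]_(l, n - l + 1) :=
  \matrix_(i < l, j < n - l + 1) vget x (i + j).

Definition frob (R : realType) (p q : nat) (M N : 'M[R]_(p, q)) : R :=
  \sum_(i < p) \sum_(j < q) M i j * N i j.

(* Adjoint of a linear map A : R^d -> R^{p x q} w.r.t. the standard inner
   products: the k-th coordinate of A^*(M) is <A(e_k), M>_F, e_k the k-th
   standard basis vector. *)
Definition adjoint (R : realType) (d p q : nat) (A : 'cV[R]_d -> 'M[R]_(p, q))
  (M : 'M[R]_(p, q)) : 'cV[R]_d :=
  \col_(k < d) frob (A (delta_mx k 0)) M.

(* k-th block y_k (0-based k) of y = (y_1^T, ..., y_N^T)^T in R^{N n} *)
Definition yblock (R : realType) (N n : nat) (y : 'cV[R]_(N * n)) (k : nat) : 'cV[R]_n :=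
  \col_(m < n) vget y (k * n + m).

(* A(y) = [H_{r+1}(y_1) ... H_{r+1}(y_N)] in R^{(r+1) x N(n-r)}: column j lies in
   block j %/ (n-r), at column j %% (n-r) of that block. *)
Definition stacked_hankel (R : realType) (N n r : nat) (y : 'cV[R]_(N * n))
  : 'M[R]_(r.+1, N * (n - r)) :=
  \matrix_(i < r.+1, j < N * (n - r))
     mget (hankel r.+1 (yblock y (j %/ (n - r)))) i (j %% (n - r)).

(* Main.v *)
Require Import Defs.
From HB Require Import structures.
From mathcomp Require Import all_boot all_order all_algebra.
From mathcomp Require Import reals.
From mathcomp Require Import zify.
Set Implicit Arguments. Unset Strict Implicit. Unset Printing Implicit Defensive.
Import Order.TTheory GRing.Theory Num.Theory.
Local Open Scope ring_scope.


Lemma coef_sumX (R : realType) (p : nat) (c : 'I_p -> R) (k : 'I_p) :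
  (\sum_(i < p) c i *: 'X^i : {poly R})`_k = c k.
Proof.
rewrite coef_sum (bigD1 k) //= coefZ coefXn eqxx mulr1 big1 ?addr0 // => i ik.
rewrite coefZ coefXn; case: eqP => [/val_inj E|]; last by rewrite mulr0.
by rewrite E eqxx in ik.
Qed.

Lemma conv0 (R : realType) p q (a : 'I_p -> R) (b : 'I_q -> R) :
 (forall m : nat, \sum_(i < p) \sum_(j < q) (m == (i + j)%N)%:R * (a i * b j) = 0) ->
 (exists i, a i != 0) -> forall j, b j = 0.
Proof.
move=> H [i0 ai0] j.
pose PA := \sum_(i < p) a i *: 'X^i : {poly R}.
pose PB := \sum_(j < q) b j *: 'X^j : {poly R}.
have PAB : PA * PB = 0.
  apply/polyP => m; rewrite coef0 -[RHS](H m) /PA /PB mulr_suml coef_sum.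
  apply: eq_bigr => i _; rewrite mulr_sumr coef_sum; apply: eq_bigr => j' _.
  by rewrite -scalerAl -scalerAr scalerA -exprD coefZ coefXn mulrC.
have PA0 : PA != 0.
  apply: contra ai0 => /eqP PA0; by rewrite -(coef_sumX a i0) -/PA PA0 coef0.
move/eqP: PAB; rewrite mulf_eq0 (negPf PA0) /= => /eqP PB0.
by rewrite -(coef_sumX b j) -/PB PB0 coef0.
Qed.

Lemma vget_delta (R : realType) d (k0 : 'I_d) t :
  vget (delta_mx k0 0 : 'cV[R]_d) t = (t == k0)%:R.
Proof.
rewrite /vget; case: insubP => [u _ <-|ht].
  by rewrite mxE eqxx andbT.
case: eqP => // E; by move: ht; rewrite E ltn_ord.
Qed.

Lemma vget_yblock (R : realType) N n (y : 'cV[R]_(N * n)) b s : (s < n)%N ->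
  vget (yblock y b) s = vget y (b * n + s).
Proof. move=> hs; rewrite {1}/vget; case: insubP => [u _ <-|]; [by rewrite mxE | by rewrite hs]. Qed.

Lemma mget_hankel (R : realType) n l (x : 'cV[R]_n) (i : 'I_l) c : (c < n - l + 1)%N ->
  mget (hankel l x) i c = vget x (i + c).
Proof. move=> hc; rewrite /mget valK; case: insubP => [u _ <-|]; [by rewrite mxE | by rewrite hc]. Qed.

Lemma sum_blocks (R : realType) (G : nat -> R) N M :
  \sum_(0 <= k < N * M) G k = \sum_(0 <= b < N) \sum_(0 <= c < M) G (b * M + c).
Proof.
elim: N => [|N IH]; first by rewrite mul0n !big_geq.
rewrite mulSnr (@big_cat_nat _ _ _ (N * M) 0 _ _ _ (leq0n _) (leq_addr _ _)) /= IH big_nat_recr //=.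
congr (_ + _); rewrite (@big_addn _ _ _ 0 (N * M + M) (N * M)) addKn.
by apply: eq_bigr => c _; rewrite addnC.
Qed.

Lemma mkj_lt N M (b : 'I_N) (c : 'I_M) : (b * M + c < N * M)%N.
Proof.
have h1 : (b * M + c < b.+1 * M)%N by rewrite mulSn [(M + _)%N]addnC ltn_add2l.
apply: leq_trans h1 _; by rewrite leq_mul2r ltn_ord orbT.
Qed.

Definition mkj N M (b : 'I_N) (c : 'I_M) : 'I_(N * M) := Ordinal (mkj_lt b c).

Lemma sum_reindex (R : realType) N M (F : 'I_(N * M) -> R) :
  \sum_(j < N * M) F j = \sum_(b < N) \sum_(c < M) F (mkj b c).
Proof.
pose G k := if insub k is Some j then F j else 0.
have GF : forall j : 'I_(N * M), G j = F j by move=> j; rewrite /G valK.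
rewrite (eq_bigr (fun j => G (val j))); last by move=> j _; rewrite GF.
rewrite -(big_mkord xpredT G) sum_blocks big_mkord; apply: eq_bigr => b _.
rewrite big_mkord; apply: eq_bigr => c _.
by rewrite -GF.
Qed.

Lemma eq_block n b' b x y : (x < n)%N -> (y < n)%N ->
  (b' * n + x == b * n + y) = (b' == b) && (x == y).
Proof.
move=> hx hy; apply/eqP/andP => [E|[/eqP -> /eqP -> //]].
have n0 : (0 < n)%N by apply: leq_ltn_trans hx.
have := congr1 (divn^~ n) E; rewrite !divnMDl // !divn_small // !addn0 => Eb.
by move: E; rewrite Eb => /eqP; rewrite eqn_add2l => ->; rewrite eqxx.
Qed.


Lemma rV_nz (R : realType) p (Rw : 'rV[R]_p) : Rw != 0 -> exists k, Rw 0 k != 0.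
Proof.
move=> H; case: (pickP (fun k => Rw 0 k != 0)) => [k Hk|H0]; first by exists k.
case/eqP: H; apply/rowP => k; rewrite mxE; by move/negbFE/eqP: (H0 k).
Qed.

Theorem lemma4p1 (R : realType) (n N : nat) (rs : 'I_N -> nat) (r : nat) :
  (1 <= n)%N -> (1 <= N)%N ->
  (forall i, 0 < rs i)%N -> (0 < r)%N ->
  (forall i, rs i <= r)%N -> (r <= (n - 1) %/ 2)%N ->
  (* case (a) *)
  (forall (i : 'I_N) (U : 'rV[R]_(n - (rs i).+1 + 1)) (Rw : 'rV[R]_((rs i).+1)),
     Rw != 0 ->
     adjoint (fun y : 'cV[R]_n => hankel (rs i).+1 y) (Rw^T *m U) = 0 ->
     U = 0)
  /\
  (* case (b) *)
  (forall (U : 'rV[R]_(N * (n - r))) (Rw : 'rV[R]_(r.+1)),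
     Rw != 0 ->
     adjoint (fun y : 'cV[R]_(N * n) => @stacked_hankel R N n r y) (Rw^T *m U) = 0 ->
     U = 0).
Proof.
move=> n1 N1 rs0 r0 rsr rn; split.
- move=> i U Rw Rw0 Hadj.
  have hl : ((rs i).+1 <= n)%N by have := rsr i; lia.
  have [k0 Hk0] := rV_nz Rw0.
  apply/rowP => j; rewrite mxE.
  apply: (@conv0 R _ _ (fun i => Rw 0 i) (fun j => U 0 j)) => [m|]; last by exists k0.
  case: (ltnP m n) => hm.
  + have := congr1 (fun X : 'cV[R]_n => X (Ordinal hm) 0) Hadj; rewrite !mxE /frob => H0; rewrite -[RHS]H0.
    apply: eq_bigr => a _; apply: eq_bigr => c _.
    by rewrite !mxE big_ord1 !mxE vget_delta /= eq_sym.
  + rewrite big1 // => a _; rewrite big1 // => c _.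
    have -> : (m == a + c)%N = false.
      by apply/negbTE; have := ltn_ord a; have := ltn_ord c; lia.
    by rewrite mul0r.
- move=> U Rw Rw0 Hadj.
  have M0 : (0 < n - r)%N by lia.
  have [k0 Hk0] := rV_nz Rw0.
  suff H : forall (b : 'I_N) (c : 'I_(n - r)), U 0 (mkj b c) = 0.
    apply/rowP => j; rewrite mxE.
    have hb : (j %/ (n - r) < N)%N by rewrite ltn_divLR.
    have hc : (j %% (n - r) < n - r)%N by rewrite ltn_mod.
    have -> : j = mkj (Ordinal hb) (Ordinal hc) by apply: val_inj; rewrite /= -divn_eq.
    exact: H.
  move=> b.
  apply: (@conv0 R _ _ (fun i => Rw 0 i) (fun c => U 0 (mkj b c))) => [m|]; last by exists k0.
  case: (ltnP m n) => hm.
  + have hk := mkj_lt b (Ordinal hm).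
    have := congr1 (fun X : 'cV[R]_(N * n) => X (Ordinal hk) 0) Hadj; rewrite !mxE /frob => H0; rewrite -[RHS]H0.
    apply: eq_bigr => a _; rewrite sum_reindex (bigD1 b) //= [X in _ + X]big1 ?addr0.
    * apply: eq_bigr => c _; rewrite !mxE big_ord1 !mxE /=.
      rewrite divnMDl // divn_small // addn0 modnMDl modn_small //.
      rewrite mget_hankel; last by have := ltn_ord c; lia.
      rewrite vget_yblock; last by have := ltn_ord c; have := ltn_ord a; lia.
      rewrite vget_delta /= eq_block ?eqxx /= 1?eq_sym //.
      by have := ltn_ord c; have := ltn_ord a; lia.
    * move=> b' hb'; apply: big1 => c _; rewrite !mxE big_ord1 !mxE /=.
      rewrite divnMDl // divn_small // addn0 modnMDl modn_small //.
      rewrite mget_hankel; last by have := ltn_ord c; lia.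
      rewrite vget_yblock; last by have := ltn_ord c; have := ltn_ord a; lia.
      rewrite vget_delta /= eq_block; last 2 first.
        by have := ltn_ord c; have := ltn_ord a; lia.
        by [].
      case: eqP => [/val_inj E|_]; [by rewrite E eqxx in hb' | by rewrite mul0r].
  + rewrite big1 // => a _; rewrite big1 // => c _.
    have -> : (m == a + c)%N = false.
      by apply/negbTE; have := ltn_ord a; have := ltn_ord c; lia.
    by rewrite mul0r.
Qed.
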